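(* Let $f:[0,\infty)\to[0,\infty)$ be continuously differentiable with $f>0$ on $[t_0,\infty)$ for some $t_0\ge0$ and $f\in C^2([t_0,\infty))$, let $g=\log f$ on $[t_0,\infty)$, and assume condition (H1) of the context. Then for every $M>0$, $$\lim_{t\to\infty}\sup_{-M\le y\le M}\left|\frac{g'\big(t+\frac{y}{g'(t)}\big)}{g'(t)}-1\right|=0.$$
   Context: Condition (H1): (i) $g'(t)>0$ and $g''(t)>0$ for all $t\ge t_0$, and there is a pair $(q,p)$ with either $q=1$ and $p\in(0,\infty]$, or $q\in(1,\infty)$ and $p\in(0,\infty)$, such that $\lim_{t\to\infty}\frac{g'(t)^2}{g(t)g''(t)}=q$ and $\lim_{t\to\infty}\frac{tg'(t)}{g(t)}=p$; (ii) if $q=1$, then $tg'(t)/g(t)$ is nondecreasing on $[t_0,\infty)$ and there exist $k\in\mathbb{N}$ and $\hat g\in C^2([t_0,\infty))$ with $f=\exp_k\circ\hat g$ and $\hat g'/\hat g$ nonincreasing on $[t_0,\infty)$ ($\exp_1=\exp$, $\exp_k=\exp_{k-1}\circ\exp$). *)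

(* Defs.v *)
From Stdlib Require Import Reals.
From Coquelicot Require Import Coquelicot.
Open Scope R_scope.

Definition expk (k : nat) (x : R) : R := Nat.iter k exp x.

(* h is C^2 on [t0, oo) (derivatives taken two-sided at every t >= t0). *)
Definition C2_on (h : R -> R) (t0 : R) : Prop :=
  forall t, t0 <= t ->
    ex_derive h t /\ ex_derive (Derive h) t /\ continuous (Derive (Derive h)) t.

Definition H1 (f : R -> R) (t0 : R) : Prop :=
  let g  := fun t => ln (f t) in
  let g1 := Derive g in
  let g2 := Derive g1 in
  (forall t, t0 <= t -> 0 < g1 t /\ 0 < g2 t) /\
  exists (q : R) (p : Rbar),
    is_lim (fun t => g1 t ^ 2 / (g t * g2 t)) p_infty q /\
    is_lim (fun t => t * g1 t / g t) p_infty p /\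
    ((q = 1 /\ Rbar_lt 0 p) \/ (1 < q /\ exists pr : R, p = Finite pr /\ 0 < pr)) /\
    (q = 1 ->
      (forall s t, t0 <= s -> s <= t -> s * g1 s / g s <= t * g1 t / g t) /\
      exists k : nat, (1 <= k)%nat /\
      exists gh : R -> R, C2_on gh t0 /\
        (forall t, t0 <= t -> f t = expk k (gh t)) /\
        (forall s t, t0 <= s -> s <= t -> Derive gh t / gh t <= Derive gh s / gh s)).

(* Main.v *)
Require Import Defs.
From Stdlib Require Import Reals Lra.
From Coquelicot Require Import Coquelicot.
Open Scope R_scope.

Lemma dln (f : R -> R) x : ex_derive f x -> 0 < f x ->
  is_derive (fun s => ln (f s)) x (Derive f x / f x).
Proof. intros. auto_derive. auto. change (fun x0 => f x0) with f. field. lra. Qed.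

Lemma dinv (h : R -> R) x : ex_derive h x -> 0 < h x ->
  is_derive (fun s => / h s) x (- Derive h x / (h x)^2).
Proof.
  intros. auto_derive. split; [auto | split; [lra | auto]].
  change (fun x0 => h x0) with h. field. lra.
Qed.

Lemma exG1 f t0 (Hpos : forall t, t0 <= t -> 0 < f t) (HC2 : C2_on f t0) x :
  t0 < x -> ex_derive (Derive (fun s => ln (f s))) x.
Proof.
  intros Hx.
  apply ex_derive_ext_loc with (fun s => Derive f s / f s).
  - assert (He : 0 < x - t0) by lra.
    exists (mkposreal _ He). intros y Hy.
    assert (Hy' : Rabs (y - x) < x - t0) by exact Hy.
    apply Rabs_def2 in Hy'.
    symmetry. apply is_derive_unique, dln.
    + apply (HC2 y). lra.
    + apply Hpos. lra.
  - destruct (HC2 x) as [A [B C]]; [lra|].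
    assert (0 < f x) by (apply Hpos; lra).
    auto_derive. repeat split; auto. lra.
Qed.

Lemma cont_of (h : R -> R) x d : is_derive h x d -> continuity_pt h x.
Proof.
  intros H. apply continuity_pt_filterlim.
  apply (ex_derive_continuous (K:=R_AbsRing) (V:=R_NormedModule) h x). exists d; exact H.
Qed.

Lemma mono_lemma (h : R -> R) a :
  (forall x, a < x -> is_derive h x (Derive h x) /\ 0 <= Derive h x) ->
  forall s t, a < s -> s <= t -> h s <= h t.
Proof.
  intros H s t Hs Hst.
  destruct (MVT_gen h s t (Derive h)) as [c [Hc Heq]].
  - intros x Hx. apply H. assert (Rmin s t <= x) by lra.
    rewrite Rmin_left in *; lra.
  - intros x Hx. apply (cont_of _ _ (Derive h x)). apply H.
    rewrite Rmin_left in Hx; lra.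
  - rewrite Rmin_left in Hc by lra. rewrite Rmax_right in Hc by lra.
    destruct (H c) as [_ Hp]; [lra|]. nra.
Qed.

Lemma lower_lin (h : R -> R) a c s :
  (forall x, a < x -> is_derive h x (Derive h x)) ->
  (forall x, s <= x -> c <= Derive h x) -> a < s ->
  forall t, s <= t -> h s + c*(t-s) <= h t.
Proof.
  intros H Hc Hs t Hst.
  destruct (MVT_gen h s t (Derive h)) as [d [Hd Heq]].
  - intros x Hx. apply H. rewrite Rmin_left in Hx; lra.
  - intros x Hx. apply (cont_of _ _ (Derive h x)). apply H.
    rewrite Rmin_left in Hx; lra.
  - rewrite Rmin_left in Hd by lra. rewrite Rmax_right in Hd by lra.
    assert (c <= Derive h d) by (apply Hc; lra). nra.
Qed.

Theorem lemma2p5 (f : R -> R) (t0 : R) :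
  0 <= t0 ->
  (forall t, 0 <= t -> 0 <= f t) ->
  (forall t, 0 < t -> ex_derive f t /\ continuous (Derive f) t) ->
  (forall t, t0 <= t -> 0 < f t) ->
  C2_on f t0 ->
  H1 f t0 ->
  forall M : R, 0 < M ->
    filterlim
      (fun t => Lub_Rbar (fun z => exists y, -M <= y <= M /\
          z = Rabs (Derive (fun s => ln (f s)) (t + y / Derive (fun s => ln (f s)) t)
                    / Derive (fun s => ln (f s)) t - 1)))
      (Rbar_locally p_infty) (Rbar_locally (Finite 0)).
Proof.
  intros H0 Hnn Hd Hpos HC2 HH M HM.
  unfold H1 in HH; cbv zeta in HH.
  destruct HH as [Hi [q [p [Hq [_ [Hqp _]]]]]].
  assert (HG2e : forall x, t0 < x -> ex_derive (Derive (fun s => ln (f s))) x)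
    by (intros; apply (exG1 f t0); auto).
  set (g := (fun s => ln (f s))) in *.
  set (G1 := Derive g) in *.
  set (G2 := Derive G1) in *.
  assert (HG1d : forall x, t0 < x -> is_derive g x (G1 x)).
  { intros x Hx. apply Derive_correct. eexists. apply dln.
    apply (HC2 x); lra. apply Hpos; lra. }
  assert (HG2d : forall x, t0 < x -> is_derive G1 x (G2 x)).
  { intros x Hx. apply Derive_correct. auto. }
  assert (Hu : forall x, t0 < x -> is_derive (fun s => / G1 s) x (- G2 x / (G1 x)^2)).
  { intros x Hx. apply dinv. auto. apply Hi; lra. }
  set (t1 := t0 + 1).
  set (c1 := G1 t1).
  assert (Hc1 : 0 < c1) by (apply Hi; unfold t1; lra).
  assert (Hmono : forall x, t1 <= x -> c1 <= G1 x).
  { intros x Hx. apply (mono_lemma G1 t0); auto; unfold t1 in *; try lra.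
    intros y Hy. split. apply HG2d; auto. left; apply Hi; lra. }
  assert (Hglin : forall x, t1 <= x -> g t1 + c1*(x - t1) <= g x).
  { intros x Hx. apply (lower_lin g t0); auto; unfold t1 in *; try lra.
    all: intros y Hy; apply Hmono; auto. }
  assert (Hq1 : 1 <= q) by (destruct Hqp as [[-> _]|[H _]]; lra).
  assert (Hratio : exists N1, forall x, N1 < x -> 1/2 < G1 x ^2 / (g x * G2 x)).
  { refine (Hq (fun r => 1/2 < r) _).
    assert (He : 0 < 1/2) by lra. exists (mkposreal _ He). intros y Hy.
    assert (Hy' : Rabs (y - q) < 1/2) by exact Hy.
    apply Rabs_def2 in Hy'. simpl. lra. }
  destruct Hratio as [N1 HN1].
  intros P [eps HP]. unfold filtermap.
  set (e := eps/2).
  assert (He : 0 < e) by (unfold e; destruct eps; simpl; lra).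
  set (δ := Rmin (1/(2*M)) (e/(2*M))).
  assert (Hδ : 0 < δ).
  { unfold δ. apply Rmin_glb_lt; apply Rdiv_lt_0_compat; lra. }
  assert (HδM1 : δ * M <= 1/2).
  { assert (δ <= 1/(2*M)) by apply Rmin_l.
    assert (1/(2*M) * M = 1/2) by (field; lra). nra. }
  assert (HδM2 : 2 * (δ * M) <= e).
  { assert (δ <= e/(2*M)) by apply Rmin_r.
    assert (e/(2*M) * M = e/2) by (field; lra). nra. }
  set (T := Rmax (Rmax (N1+1) t1) (t1 + Rabs(2/δ - g t1)/c1 + 1)).
  assert (HT1 : N1 + 1 <= T /\ t1 <= T /\ t1 + Rabs(2/δ - g t1)/c1 + 1 <= T).
  { unfold T. repeat split.
    - eapply Rle_trans; [apply Rmax_l|apply Rmax_l].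
    - eapply Rle_trans; [apply Rmax_r|apply Rmax_l].
    - apply Rmax_r. }
  assert (HT : forall s, T <= s -> G2 s / G1 s ^2 <= δ).
  { intros s Hs.
    assert (Hs1 : t1 <= s) by lra.
    assert (HGs : c1 <= G1 s) by auto.
    assert (Hgs := Hglin s Hs1).
    assert (HA : Rabs(2/δ - g t1)/c1 * c1 = Rabs(2/δ - g t1)) by (field; lra).
    assert (Hab := Rle_abs (2/δ - g t1)).
    assert (Hs2 : Rabs(2/δ - g t1)/c1 + 1 <= s - t1) by lra.
    assert (Hgb : 2/δ < g s) by nra.
    assert (H2d : 2/δ * δ = 2) by (field; lra).
    assert (Hgp : 0 < 2/δ) by (apply Rdiv_lt_0_compat; lra).
    assert (HG2p : 0 < G2 s) by (apply Hi; unfold t1 in *; lra).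
    assert (HG1p : 0 < G1 s) by lra.
    assert (Hr := HN1 s ltac:(lra)).
    set (r := G1 s ^2 / (g s * G2 s)) in Hr.
    assert (Hre : G1 s ^ 2 = r * (g s * G2 s)) by (unfold r; field; nra).
    set (w := G2 s / G1 s ^2).
    assert (Hwe : w * G1 s ^2 = G2 s) by (unfold w; field; lra).
    assert (HA2 : 0 < G1 s ^2) by nra.
    assert (g s * δ > 2) by nra.
    assert (Hx : δ * G1 s ^2 = (r * (g s * δ)) * G2 s) by (rewrite Hre; ring).
    assert (Hy : r * (g s * δ) > 1) by nra.
    assert (G2 s < δ * G1 s ^2) by (rewrite Hx; nra).
    nra. }
  exists (T + M / c1). intros t Ht.
  match goal with |- context [Lub_Rbar ?E0] => set (E := E0) end.
  assert (HMc : M / c1 * c1 = M) by (field; lra).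
  assert (Ht1 : t1 <= t) by (assert (0 < M / c1) by (apply Rdiv_lt_0_compat; lra); lra).
  assert (Ha : c1 <= G1 t) by auto.
  assert (Hz : forall z, E z -> 0 <= z <= e).
  { intros z [y [Hy ->]]. split; [apply Rabs_pos|].
    set (a := G1 t). set (s := t + y / a). set (b := G1 s).
    assert (Hap : 0 < a) by (unfold a; lra).
    assert (Hca : c1 <= a) by (unfold a; lra).
    assert (Hya : y / a * a = y) by (field; lra).
    assert (Hyb : Rabs (y / a) <= M / c1).
    { assert (Rabs (y/a) * a = Rabs y).
      { rewrite <- Hya at 2. rewrite Rabs_mult. rewrite (Rabs_right a) by lra. lra. }
      assert (Rabs y <= M) by (apply Rabs_le; lra).
      assert (0 <= Rabs (y/a)) by apply Rabs_pos.
      nra. }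
    apply Rabs_le_between in Hyb.
    assert (HsT : T < s) by (unfold s; lra).
    assert (Hmin : T < Rmin t s) by (apply Rmin_glb_lt; lra).
    assert (Hmax : Rmin t s <= Rmax t s) by (apply Rle_trans with t; [apply Rmin_l|apply Rmax_l]).
    destruct (MVT_gen (fun x => / G1 x) t s (fun x => - G2 x / (G1 x)^2)) as [c [Hc Hmvt]].
    - intros x Hx. apply Hu. unfold t1 in *; lra.
    - intros x Hx. apply (cont_of _ _ (- G2 x / (G1 x)^2)). apply Hu. unfold t1 in *; lra.
    - assert (HwT := HT c ltac:(lra)).
      set (w := G2 c / G1 c ^2) in HwT.
      assert (Hw0 : 0 < w).
      { unfold w. assert (0 < G2 c) by (apply Hi; unfold t1 in *; lra).
        assert (0 < G1 c) by (apply Hi; unfold t1 in *; lra).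
        apply Rdiv_lt_0_compat; nra. }
      assert (HG1c : 0 < G1 c) by (apply Hi; unfold t1 in *; lra).
      assert (Hbp : 0 < b) by (unfold b; apply Hi; unfold t1 in *; lra).
      assert (Hm2 : / b - / a = - w * (y / a)).
      { simpl in Hmvt. unfold b, a. rewrite Hmvt. fold a. unfold w, s. field. repeat split; lra. }
      assert (Heq : b - a = w * y * b).
      { replace (b - a) with ((/a - /b) * a * b) by (field; lra).
        replace (/a - /b) with (w * (y / a)) by lra. field. lra. }
      assert (Hwy : Rabs (w * y) <= δ * M).
      { rewrite Rabs_mult. rewrite (Rabs_right w) by lra.
        assert (Rabs y <= M) by (apply Rabs_le; lra).
        assert (0 <= Rabs y) by apply Rabs_pos. nra. }
      assert (Hwy2 := Rle_abs (w * y)).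
      assert (Hb2 : b <= 2 * a) by nra.
      replace (b / a - 1) with ((b - a) / a) by (field; lra).
      rewrite Heq.
      replace (w * y * b / a) with (w * y * (b / a)) by (field; lra).
      rewrite Rabs_mult. rewrite (Rabs_right (b / a)).
      + assert (b / a <= 2).
        { assert (b / a * a = b) by (field; lra). nra. }
        assert (0 <= Rabs (w * y)) by apply Rabs_pos.
        nra.
      + left. apply Rdiv_lt_0_compat; lra. }
  assert (HE0 : E 0).
  { exists 0. split; [lra|].
    assert (0 < G1 t) by lra.
    replace (t + 0 / G1 t) with t by (field; lra).
    replace (G1 t / G1 t - 1) with 0 by (field; lra). now rewrite Rabs_R0. }
  destruct (Lub_Rbar_correct E) as [Hub Hleast].
  assert (Hl1 : Rbar_le (Lub_Rbar E) (Finite e)).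
  { apply Hleast. intros z Hz'. simpl. apply Hz. exact Hz'. }
  assert (Hl2 : Rbar_le (Finite 0) (Lub_Rbar E)) by (apply Hub; exact HE0).
  destruct (Lub_Rbar E) as [r| |]; simpl in Hl1, Hl2; try contradiction.
  apply HP.
  change (Rabs (r - 0) < eps).
  rewrite Rminus_0_r, Rabs_right by lra.
  unfold e in *. destruct eps; simpl in *; lra.
Qed.
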